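(* Let $l>0$ and $(a,M)\in\mathcal B_l$. Let $(\omega,m)\in\mathcal{SF}$. Then $\mathcal T(\omega,m,\cdot)\in C^\infty(r_+,\bar r_+)$, and $\mathcal T(\omega,m,\cdot)$ has a unique critical point $r_{crit}(\omega,m)\in(r_+,\bar r_+)$ (i.e. a unique point where $\frac{d\mathcal T}{dr}=0$), which is a minimum. Moreover $r_{crit}(\omega,m)=r_s(\omega,m)$, where $r_s\in(r_+,\bar r_+)$ is the (unique) value with $\omega=\frac{am\Xi}{r_s^2+a^2}$, and $$\Big|\frac{d^2\mathcal T}{dr^2}(\omega,m,r_{crit})\Big|>0 .$$
   Context: Fix $l>0$. For $a\in\mathbb R$, $M>0$ set $\Delta(r)=(r^2+a^2)\big(1-\frac{r^2}{l^2}\big)-2Mr$. We write $(a,M)\in\mathcal B_l$ (subextremal) if $\Delta$ has four distinct real roots $\bar r_-<0\le r_-<r_+<\bar r_+$. Set $\Xi=1+\frac{a^2}{l^2}$, $\omega_+=\frac{a\Xi}{r_+^2+a^2}$, $\bar\omega_+=\frac{a\Xi}{\bar r_+^2+a^2}$. The superradiant set is $\mathcal{SF}=\{(\omega,m)\in\mathbb R\times\mathbb Z:\ (\omega-m\omega_+)(\omega-m\bar\omega_+)<0\}$ (equivalently $am\omega\in(\frac{a^2m^2\Xi}{\bar r_+^2+a^2},\frac{a^2m^2\Xi}{r_+^2+a^2})$). For $(\omega,m)\in\mathbb R\times\mathbb Z$ and $r\in(r_+,\bar r_+)$ define $$\mathcal T(\omega,m,r)=\frac{(r^2+a^2)^2}{\Delta(r)}\Big(\omega-\frac{am\Xi}{r^2+a^2}\Big)^2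 .$$ *)

(* Defs.v *)
From Stdlib Require Import Reals ZArith.
From Coquelicot Require Import Coquelicot.
Open Scope R_scope.

Definition Delta (l a M r : R) : R :=
  (r ^ 2 + a ^ 2) * (1 - r ^ 2 / l ^ 2) - 2 * M * r.

(* (a,M) in B_l, with the four distinct real roots of Delta named
   rbm < 0 <= rm < rp < rbp  (bar r_-, r_-, r_+, bar r_+).
   Delta is a quartic with leading coefficient -1/l^2, so these four
   distinct roots are all its roots, hence they are determined by (a,M). *)
Definition subextremal (l a M rbm rm rp rbp : R) : Prop :=
  0 < M /\
  rbm < 0 /\ 0 <= rm /\ rm < rp /\ rp < rbp /\
  Delta l a M rbm = 0 /\ Delta l a M rm = 0 /\
  Delta l a M rp = 0 /\ Delta l a M rbp = 0.

Definition Xi (l a : R) : R := 1 + a ^ 2 / l ^ 2.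

Definition omega_plus (l a rp : R) : R := a * Xi l a / (rp ^ 2 + a ^ 2).
Definition omegabar_plus (l a rbp : R) : R := a * Xi l a / (rbp ^ 2 + a ^ 2).

Definition superradiant (l a rp rbp omega : R) (m : Z) : Prop :=
  (omega - IZR m * omega_plus l a rp) * (omega - IZR m * omegabar_plus l a rbp) < 0.

Definition TT (l a M omega : R) (m : Z) (r : R) : R :=
  (r ^ 2 + a ^ 2) ^ 2 / Delta l a M r
  * (omega - a * IZR m * Xi l a / (r ^ 2 + a ^ 2)) ^ 2.

(* Main.v *)
Require Import Defs.
From Stdlib Require Import Reals ZArith.
From Coquelicot Require Import Coquelicot.
From Stdlib Require Import Lra Lia Psatz FunctionalExtensionality.
Open Scope R_scope.
Lemma loc_int (lo hi x : R) (P : R -> Prop) :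
  lo < x < hi -> (forall y, lo < y < hi -> P y) -> locally x P.
Proof.
  intros Hx HP.
  assert (He : 0 < Rmin (x - lo) (hi - x)) by (apply Rmin_pos; lra).
  exists (mkposreal _ He). intros y Hy. apply HP.
  change (Rabs (y - x) < Rmin (x - lo) (hi - x)) in Hy.
  pose proof (Rmin_l (x - lo) (hi - x)). pose proof (Rmin_r (x - lo) (hi - x)).
  apply Rabs_def2 in Hy. lra.
Qed.

Fixpoint Sm (lo hi : R) (n : nat) (f : R -> R) : Prop :=
  match n with
  | O => True
  | S n => (forall x, lo < x < hi -> ex_derive f x) /\ Sm lo hi n (Derive f)
  end.

Lemma Sm_ext lo hi n : forall f g, (forall x, lo < x < hi -> f x = g x) ->
  Sm lo hi n f -> Sm lo hi n g.
Proof.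
  induction n as [|n IH]; simpl; auto.
  intros f g Hfg [Hd Hs]. split.
  - intros x Hx. apply ex_derive_ext_loc with f; auto.
    apply (loc_int lo hi); auto.
  - apply IH with (Derive f); auto.
    intros x Hx. apply Derive_ext_loc. apply (loc_int lo hi); auto.
Qed.

Lemma Sm_le lo hi n : forall f, Sm lo hi (S n) f -> Sm lo hi n f.
Proof.
  induction n as [|n IH]; simpl; auto.
  intros f [Hd Hs]. split; auto.
Qed.

Lemma Sm_cst lo hi n c : Sm lo hi n (fun _ => c).
Proof.
  revert c; induction n as [|n IH]; simpl; auto. intros c. split.
  - intros; apply ex_derive_const.
  - apply Sm_ext with (fun _ => 0); [intros; rewrite Derive_const; auto | apply IH].
Qed.

Lemma Sm_id lo hi n : Sm lo hi n (fun x => x).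
Proof.
  destruct n; simpl; auto. split.
  - intros; apply ex_derive_id.
  - apply Sm_ext with (fun _ => 1); [intros; rewrite Derive_id; auto | apply Sm_cst].
Qed.

Lemma Sm_plus lo hi n : forall f g, Sm lo hi n f -> Sm lo hi n g ->
  Sm lo hi n (fun x => f x + g x).
Proof.
  induction n as [|n IH]; simpl; auto.
  intros f g [Hf Sf] [Hg Sg]. split.
  - intros x Hx. apply (ex_derive_plus f g); auto.
  - apply Sm_ext with (fun x => Derive f x + Derive g x); auto.
    intros x Hx. rewrite Derive_plus; auto.
Qed.

Lemma Sm_mult lo hi n : forall f g, Sm lo hi n f -> Sm lo hi n g ->
  Sm lo hi n (fun x => f x * g x).
Proof.
  induction n as [|n IH]; auto.
  intros f g Hf' Hg'. pose proof (Sm_le _ _ _ _ Hf') as Sf0.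
  pose proof (Sm_le _ _ _ _ Hg') as Sg0.
  destruct Hf' as [Hf Sf]; destruct Hg' as [Hg Sg]. split.
  - intros x Hx. apply (ex_derive_mult f g); auto.
  - apply Sm_ext with (fun x => Derive f x * g x + f x * Derive g x).
    + intros x Hx. rewrite Derive_mult; auto.
    + apply Sm_plus; apply IH; auto.
Qed.

Lemma Sm_inv lo hi n : forall f, Sm lo hi n f -> (forall x, lo < x < hi -> f x <> 0) ->
  Sm lo hi n (fun x => / f x).
Proof.
  induction n as [|n IH]; auto.
  intros f Hf' Hnz. pose proof (Sm_le _ _ _ _ Hf') as Sf0.
  destruct Hf' as [Hf Sf]. split.
  - intros x Hx. apply ex_derive_inv; auto.
  - apply Sm_ext with (fun x => (fun _ => -1) x * Derive f x * ((/ f x) * (/ f x))).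
    + intros x Hx. rewrite Derive_inv; auto. specialize (Hnz x Hx). field; auto.
    + apply Sm_mult. apply Sm_mult; auto. apply Sm_cst. apply Sm_mult; apply IH; auto.
Qed.

Lemma Sm_pow lo hi n f k : Sm lo hi n f -> Sm lo hi n (fun x => f x ^ k).
Proof.
  intros Hf. induction k as [|k IH]; simpl.
  - apply Sm_cst.
  - apply Sm_mult; auto.
Qed.

Lemma Sm_exdn lo hi n : forall f, Sm lo hi (S n) f -> forall x, lo < x < hi ->
  ex_derive_n f (S n) x.
Proof.
  induction n as [|n IH]; intros f Hf x Hx; simpl.
  - destruct Hf as [Hd _]. apply Hd; auto.
  - destruct Hf as [Hd Hs]. specialize (IH (Derive f) Hs x Hx). simpl in IH.
    apply ex_derive_ext with (Derive_n (Derive f) n); auto.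
    intros t. change (Derive_n (Derive_n f 1) n t = Derive (Derive_n f n) t). rewrite Derive_n_comp. rewrite Nat.add_1_r. reflexivity.
Qed.
Lemma mz (x y z : R) : x <> y -> (x - y) * z = 0 -> z = 0.
Proof. intros H E. apply Rmult_integral in E. destruct E; auto. lra. Qed.

Lemma cubic0 (x1 x2 x3 x4 b3 b2 b1 b0 : R) :
  x1 <> x2 -> x1 <> x3 -> x1 <> x4 -> x2 <> x3 -> x2 <> x4 -> x3 <> x4 ->
  b3*x1^3 + b2*x1^2 + b1*x1 + b0 = 0 ->
  b3*x2^3 + b2*x2^2 + b1*x2 + b0 = 0 ->
  b3*x3^3 + b2*x3^2 + b1*x3 + b0 = 0 ->
  b3*x4^3 + b2*x4^2 + b1*x4 + b0 = 0 ->
  b3 = 0 /\ b2 = 0 /\ b1 = 0 /\ b0 = 0.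
Proof.
  intros H12 H13 H14 H23 H24 H34 P1 P2 P3 P4.
  assert (E12 : b3*(x1^2+x1*x2+x2^2) + b2*(x1+x2) + b1 = 0).
  { apply (mz x1 x2); auto. rewrite <- (Rminus_diag_eq _ _ (eq_trans P1 (eq_sym P2))). ring. }
  assert (E13 : b3*(x1^2+x1*x3+x3^2) + b2*(x1+x3) + b1 = 0).
  { apply (mz x1 x3); auto. rewrite <- (Rminus_diag_eq _ _ (eq_trans P1 (eq_sym P3))). ring. }
  assert (E14 : b3*(x1^2+x1*x4+x4^2) + b2*(x1+x4) + b1 = 0).
  { apply (mz x1 x4); auto. rewrite <- (Rminus_diag_eq _ _ (eq_trans P1 (eq_sym P4))). ring. }
  assert (F3 : b3*(x1+x2+x3) + b2 = 0).
  { apply (mz x2 x3); auto. rewrite <- (Rminus_diag_eq _ _ (eq_trans E12 (eq_sym E13))). ring. }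
  assert (F4 : b3*(x1+x2+x4) + b2 = 0).
  { apply (mz x2 x4); auto. rewrite <- (Rminus_diag_eq _ _ (eq_trans E12 (eq_sym E14))). ring. }
  assert (B3 : b3 = 0).
  { apply (mz x3 x4); auto. rewrite <- (Rminus_diag_eq _ _ (eq_trans F3 (eq_sym F4))). ring. }
  subst b3. assert (b2 = 0) by lra. subst b2. assert (b1 = 0) by lra. subst b1. lra.
Qed.
Definition Qf (x1 x2 x3 x4 r : R) := (r-x1)*(r-x2)*(r-x3)*(r-x4).
Definition Qd (x1 x2 x3 x4 r : R) :=
  (r-x2)*(r-x3)*(r-x4) + (r-x1)*(r-x3)*(r-x4) + (r-x1)*(r-x2)*(r-x4) + (r-x1)*(r-x2)*(r-x3).
Lemma Hpos (rbm rm rp rbp r s : R) : rbm = -(rm+rp+rbp) -> 0 <= rm -> rm < rp -> rp < r < rbp ->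
  rp^2 <= s <= rbp^2 ->
  (r^2 - s) * Qd rbm rm rp rbp r - 4*r*Qf rbm rm rp rbp r > 0.
Proof.
  intros Hs Hm Hmp Hr Hsr. unfold Qd, Qf.
  set (d1 := r - rbm). set (d2 := r - rm). set (d3 := r - rp). set (d4 := rbp - r).
  assert (E1 : d1 = r + rm + rp + rbp) by (unfold d1; lra).
  assert (P1 : r + rp < d1) by lra.
  assert (P2 : d3 <= d2) by (unfold d2, d3; lra).
  assert (P3 : 0 < d3) by (unfold d3; lra).
  assert (P4 : 0 < d4) by (unfold d4; lra).
  assert (P2' : 0 < d2) by lra.
  assert (P1' : 0 < d1) by lra.
  replace (r - rbm) with d1 by reflexivity. replace (r - rm) with d2 by reflexivity.
  replace (r - rp) with d3 by reflexivity. replace (r - rbp) with (-d4) by (unfold d4; ring).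
  assert (A : (r^2 - rp^2) * (d2*d3*(-d4) + d1*d3*(-d4) + d1*d2*(-d4) + d1*d2*d3) - 4*r*(d1*d2*d3*(-d4)) > 0).
  { replace (r^2 - rp^2) with (d3*(r+rp)) by (unfold d3; ring).
    assert (X1 : (r+rp)*d3*d1 <= (r+rp)*d2*d1).
    { apply Rmult_le_compat_r; [lra|]. apply Rmult_le_compat_l; lra. }
    assert (X2 : (r+rp)*d3*d2 < d1*d3*d2).
    { apply Rmult_lt_compat_r; [lra|]. apply Rmult_lt_compat_r; lra. }
    assert (X3 : 2*r*(d1*d2) <= (3*r - rp)*(d1*d2)).
    { apply Rmult_le_compat_r; [apply Rmult_le_pos; lra|]. lra. }
    assert (X4 : 0 < d1*d2*d3) by (apply Rmult_lt_0_compat; [apply Rmult_lt_0_compat|]; lra).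
    assert (X5 : 0 < d4 * ((3*r - rp)*(d1*d2) - (r+rp)*d3*(d1+d2))).
    { apply Rmult_lt_0_compat; [lra|].
      assert (E3 : d1*d2*(r+rp+d3) = 2*r*(d1*d2)) by (unfold d3; ring). nra. }
    assert (X6 : 0 < (r+rp)*(d1*d2*d3)) by (apply Rmult_lt_0_compat; lra).
    assert (Y : (d3*(r+rp)) * (d2*d3*(-d4) + d1*d3*(-d4) + d1*d2*(-d4) + d1*d2*d3) - 4*r*(d1*d2*d3*(-d4))
      = d3 * (d4 * ((3*r - rp)*(d1*d2) - (r+rp)*d3*(d1+d2)) + (r+rp)*(d1*d2*d3))).
    { unfold d1, d2, d3, d4; ring. }
    rewrite Y. apply Rmult_lt_0_compat; lra. }
  assert (B : (r^2 - rbp^2) * (d2*d3*(-d4) + d1*d3*(-d4) + d1*d2*(-d4) + d1*d2*d3) - 4*r*(d1*d2*d3*(-d4)) > 0).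
  { replace (r^2 - rbp^2) with (-(d4*(r+rbp))) by (unfold d4; ring).
    assert (X1 : d3*(d1*d2) <= (r+rbp)*(d1*d2)).
    { apply Rmult_le_compat_r; [apply Rmult_le_pos; lra|]. unfold d3; lra. }
    assert (X4 : 0 < d1*d2*d3) by (apply Rmult_lt_0_compat; [apply Rmult_lt_0_compat|]; lra).
    assert (X5 : 0 <= (r+rbp)*d4*(d2*d3 + d1*d3)).
    { apply Rmult_le_pos; [apply Rmult_le_pos|]; nra. }
    assert (X6 : 0 < d4*((r+rbp)*(d1*d2)) + (3*r - rbp)*(d1*d2*d3)).
    { assert (d4 * (d3*(d1*d2)) <= d4*((r+rbp)*(d1*d2))) by (apply Rmult_le_compat_l; lra).
      assert (d4 * (d3*(d1*d2)) + (3*r - rbp)*(d1*d2*d3) = 2*r*(d1*d2*d3)) by (unfold d4; ring).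
      assert (0 < 2*r*(d1*d2*d3)) by (apply Rmult_lt_0_compat; lra). lra. }
    assert (Y : (-(d4*(r+rbp))) * (d2*d3*(-d4) + d1*d3*(-d4) + d1*d2*(-d4) + d1*d2*d3) - 4*r*(d1*d2*d3*(-d4))
      = d4 * ((r+rbp)*d4*(d2*d3 + d1*d3) + (d4*((r+rbp)*(d1*d2)) + (3*r - rbp)*(d1*d2*d3)))).
    { unfold d1, d2, d3, d4; ring. }
    rewrite Y. apply Rmult_lt_0_compat; lra. }
  set (QD := d2*d3*(-d4) + d1*d3*(-d4) + d1*d2*(-d4) + d1*d2*d3) in *.
  set (QQ := d1*d2*d3*(-d4)) in *.
  destruct (Rle_or_lt 0 QD) as [HQ|HQ].
  - assert ((rbp^2 - s)*QD >= 0) by (apply Rle_ge, Rmult_le_pos; lra).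
    assert ((r^2 - s)*QD = (r^2 - rbp^2)*QD + (rbp^2 - s)*QD) by ring. lra.
  - assert ((s - rp^2)*QD <= 0).
    { assert (0 <= (s - rp^2)*(-QD)) by (apply Rmult_le_pos; lra). lra. }
    assert ((r^2 - s)*QD = (r^2 - rp^2)*QD - (s - rp^2)*QD) by ring. lra.
Qed.
Definition Dp (l a M r : R) : R :=
  2*r*(1 - r^2/l^2) + (r^2+a^2)*(-(2*r/l^2)) - 2*M.
Lemma G_der l a M w s r : l <> 0 -> Defs.Delta l a M r <> 0 ->
  is_derive (fun r => w^2 * (r^2 - s)^2 / Defs.Delta l a M r) r
   (w^2 * (2*(r^2-s)*(2*r) * Defs.Delta l a M r - (r^2-s)^2 * Dp l a M r) / (Defs.Delta l a M r)^2).
Proof.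
  intros Hl HD. unfold Defs.Delta, Dp in *. auto_derive.
  - auto.
  - field. split; auto.
    intro E. apply HD.
    assert (E2 : (r ^ 2 + a ^ 2) * (l ^ 2 - r ^ 2) - 2 * M * r * l ^ 2 = l^2 * ((r ^ 2 + a ^ 2) * (1 - r ^ 2 / l ^ 2) - 2 * M * r)) by (field; auto).
    rewrite E2 in E. apply Rmult_integral in E. destruct E as [E|E]; auto.
    exfalso. apply Hl. nra.
Qed.
Lemma G1_der l a M w q : l <> 0 -> Defs.Delta l a M q <> 0 ->
  is_derive (fun r => w^2 * (2*(r^2-q^2)*(2*r) * Defs.Delta l a M r - (r^2-q^2)^2 * Dp l a M r) / (Defs.Delta l a M r)^2) q
   (8 * w^2 * q^2 / Defs.Delta l a M q).
Proof.
  intros Hl HD.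
  assert (HD2 : (q ^ 2 + a ^ 2) * (l ^ 2 - q ^ 2) - 2 * M * q * l ^ 2 <> 0).
  { intro E. apply HD. unfold Defs.Delta.
    assert (E2 : (q ^ 2 + a ^ 2) * (l ^ 2 - q ^ 2) - 2 * M * q * l ^ 2 = l^2 * ((q ^ 2 + a ^ 2) * (1 - q ^ 2 / l ^ 2) - 2 * M * q)) by (field; auto).
    rewrite E2 in E. apply Rmult_integral in E. destruct E as [E|E]; auto.
    exfalso. apply Hl. nra. }
  unfold Defs.Delta, Dp in *. auto_derive.
  - repeat split; auto.
  - field. repeat split; auto.
Qed.

Theorem mainTheorem1 (l a M rbm rm rp rbp omega : R) (m : Z) :
  0 < l ->
  subextremal l a M rbm rm rp rbp ->
  superradiant l a rp rbp omega m ->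
  (* smoothness on (r_+, bar r_+) *)
  (forall (n : nat) (r : R), rp < r < rbp -> ex_derive_n (TT l a M omega m) n r) /\
  exists rcrit : R,
    rp < rcrit < rbp /\
    (* critical point *)
    Derive (TT l a M omega m) rcrit = 0 /\
    (* unique critical point *)
    (forall r : R, rp < r < rbp -> Derive (TT l a M omega m) r = 0 -> r = rcrit) /\
    (* it is a minimum on (r_+, bar r_+) *)
    (forall r : R, rp < r < rbp -> TT l a M omega m rcrit <= TT l a M omega m r) /\
    (* rcrit = r_s: the unique r_s in (r_+, bar r_+) with omega = a m Xi/(r_s^2+a^2) *)
    omega = a * IZR m * Xi l a / (rcrit ^ 2 + a ^ 2) /\
    (forall rs : R, rp < rs < rbp ->
        omega = a * IZR m * Xi l a / (rs ^ 2 + a ^ 2) -> rs = rcrit) /\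
    (* nondegeneracy *)
    Rabs (Derive_n (TT l a M omega m) 2 rcrit) > 0.
Proof.
  intros Hl Hsub Hsr.
  destruct Hsub as (HM & Hbm & Hm & Hmp & Hpb & R1 & R2 & R3 & R4).
  assert (Hl0 : l <> 0) by lra.
  assert (Ha : a <> 0).
  { intro E. subst a. unfold superradiant, omega_plus, omegabar_plus in Hsr.
    replace (0 * Xi l 0 / (rp ^ 2 + 0 ^ 2)) with 0 in Hsr by (unfold Rdiv; ring).
    replace (0 * Xi l 0 / (rbp ^ 2 + 0 ^ 2)) with 0 in Hsr by (unfold Rdiv; ring).
    nra. }
  assert (Ha2 : 0 < a^2).
  { destruct (Rtotal_order a 0) as [h|[h|h]]; [nra|contradiction|nra]. }
  assert (Hu : forall r, 0 < r^2 + a^2) by (intros r; nra).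
  assert (Hrp : 0 < rp) by lra.
  remember (a * IZR m * Xi l a) as c eqn:Hcdef.
  assert (Hprod : (omega*(rp^2+a^2) - c) * (omega*(rbp^2+a^2) - c) < 0).
  { unfold superradiant, omega_plus, omegabar_plus in Hsr.
    assert (E1 : omega*(rp^2+a^2) - c = (rp^2+a^2) * (omega - IZR m * (a * Xi l a / (rp ^ 2 + a ^ 2)))).
    { rewrite Hcdef. field. specialize (Hu rp). lra. }
    assert (E2 : omega*(rbp^2+a^2) - c = (rbp^2+a^2) * (omega - IZR m * (a * Xi l a / (rbp ^ 2 + a ^ 2)))).
    { rewrite Hcdef. field. specialize (Hu rbp). lra. }
    rewrite E1, E2.
    set (X := omega - IZR m * (a * Xi l a / (rp ^ 2 + a ^ 2))) in *.
    set (Y := omega - IZR m * (a * Xi l a / (rbp ^ 2 + a ^ 2))) in *.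
    pose proof (Hu rp). pose proof (Hu rbp).
    replace ((rp ^ 2 + a ^ 2) * X * ((rbp ^ 2 + a ^ 2) * Y)) with (((rp ^ 2 + a ^ 2) * (rbp ^ 2 + a ^ 2)) * (X*Y)) by ring.
    assert (0 < (rp ^ 2 + a ^ 2) * (rbp ^ 2 + a ^ 2)) by (apply Rmult_lt_0_compat; lra).
    nra. }
  assert (Hw : omega <> 0).
  { intro E. subst omega. nra. }
  assert (Hw2 : 0 < omega^2).
  { destruct (Rtotal_order omega 0) as [h|[h|h]]; [nra|contradiction|nra]. }
  set (s := c/omega - a^2).
  assert (Hf : forall r, omega*(r^2+a^2) - c = omega*(r^2 - s)).
  { intros r. unfold s. field. auto. }
  rewrite !Hf in Hprod.
  assert (Hps : (rp^2 - s) * (rbp^2 - s) < 0).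
  { replace (omega * (rp ^ 2 - s) * (omega * (rbp ^ 2 - s))) with (omega^2 * ((rp^2 - s) * (rbp^2 - s))) in Hprod by ring.
    nra. }
  assert (Hrr : rp^2 < rbp^2) by nra.
  assert (Hs1 : rp^2 < s) by nra.
  assert (Hs2 : s < rbp^2) by nra.
  set (rs := sqrt s).
  assert (Hrs2 : rs^2 = s).
  { unfold rs. simpl. rewrite Rmult_1_r. apply sqrt_sqrt. nra. }
  assert (Hrs0 : 0 <= rs) by apply sqrt_pos.
  assert (Hrs1 : rp < rs) by nra.
  assert (Hrs3 : rs < rbp) by nra.
  assert (Hc : c = omega * (rs^2 + a^2)).
  { rewrite Hrs2. unfold s. field. auto. }
  set (G := fun r => omega^2 * (r^2 - rs^2)^2 / Defs.Delta l a M r).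
  assert (HTG : TT l a M omega m = G).
  { apply functional_extensionality. intros r. unfold TT, G.
    rewrite <- Hcdef. rewrite Hc.
    pose proof (Hu r).
    assert (E : (omega - omega * (rs ^ 2 + a ^ 2) / (r ^ 2 + a ^ 2)) ^ 2 * (r^2+a^2)^2 = omega^2 * (r^2 - rs^2)^2).
    { field. lra. }
    unfold Rdiv in *.
    transitivity (((omega - omega * (rs ^ 2 + a ^ 2) * / (r ^ 2 + a ^ 2)) ^ 2 * (r^2+a^2)^2) * / Defs.Delta l a M r).
    - ring.
    - rewrite E. ring. }
  rewrite HTG.
  (* Vieta *)
  set (e2 := rbm*rm + rbm*rp + rbm*rbp + rm*rp + rm*rbp + rp*rbp).
  set (e3 := rbm*rm*rp + rbm*rm*rbp + rbm*rp*rbp + rm*rp*rbp).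
  set (e4 := rbm*rm*rp*rbp).
  assert (Hid : forall x, (-(/l^2)*(rbm+rm+rp+rbp))*x^3 + (1 - a^2*/l^2 + /l^2*e2)*x^2
     + (-2*M - /l^2*e3)*x + (a^2 + /l^2*e4) = Defs.Delta l a M x + /l^2 * Qf rbm rm rp rbp x).
  { intros x. unfold Defs.Delta, Qf, e2, e3, e4. field. auto. }
  assert (Hq1 : Qf rbm rm rp rbp rbm = 0) by (unfold Qf; ring).
  assert (Hq2 : Qf rbm rm rp rbp rm = 0) by (unfold Qf; ring).
  assert (Hq3 : Qf rbm rm rp rbp rp = 0) by (unfold Qf; ring).
  assert (Hq4 : Qf rbm rm rp rbp rbp = 0) by (unfold Qf; ring).
  assert (HB : -(/l^2)*(rbm+rm+rp+rbp) = 0 /\ (1 - a^2*/l^2 + /l^2*e2) = 0 /\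
      (-2*M - /l^2*e3) = 0 /\ (a^2 + /l^2*e4) = 0).
  { apply (cubic0 rbm rm rp rbp); try lra;
    [ rewrite Hid, R1, Hq1; ring | rewrite Hid, R2, Hq2; ring
    | rewrite Hid, R3, Hq3; ring | rewrite Hid, R4, Hq4; ring ]. }
  destruct HB as (B3 & B2 & B1 & B0).
  assert (HK : 0 < / l^2) by (apply Rinv_0_lt_compat; nra).
  assert (Hsum : rbm = -(rm+rp+rbp)).
  { assert (/l^2 * (rbm+rm+rp+rbp) = 0) by lra.
    apply Rmult_integral in H. destruct H; lra. }
  assert (HDf : forall x, Defs.Delta l a M x = -(/l^2) * Qf rbm rm rp rbp x).
  { intros x. specialize (Hid x). rewrite B3, B2, B1, B0 in Hid. lra. }
  assert (HDp : forall x, Dp l a M x = -(/l^2) * Qd rbm rm rp rbp x).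
  { intros x.
    assert (E : Dp l a M x + /l^2 * Qd rbm rm rp rbp x =
      3*(-(/l^2)*(rbm+rm+rp+rbp))*x^2 + 2*(1 - a^2*/l^2 + /l^2*e2)*x + (-2*M - /l^2*e3)).
    { unfold Dp, Qd, e2, e3. field. auto. }
    rewrite B3, B2, B1 in E. lra. }
  assert (HDpos : forall r, rp < r < rbp -> 0 < Defs.Delta l a M r).
  { intros r Hr. rewrite HDf. unfold Qf.
    assert (0 < (r-rbm)*(r-rm)*(r-rp)*(rbp-r)).
    { repeat apply Rmult_lt_0_compat; lra. }
    replace (-(/l^2) * ((r - rbm) * (r - rm) * (r - rp) * (r - rbp)))
      with (/l^2 * ((r - rbm) * (r - rm) * (r - rp) * (rbp - r))) by ring.
    apply Rmult_lt_0_compat; lra. }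
  assert (HDG : forall r, rp < r < rbp -> Derive G r =
     omega^2 * (2*(r^2-rs^2)*(2*r) * Defs.Delta l a M r - (r^2-rs^2)^2 * Dp l a M r) / (Defs.Delta l a M r)^2).
  { intros r Hr. apply is_derive_unique. apply G_der; auto.
    specialize (HDpos r Hr). lra. }
  assert (HSm : forall n, Sm rp rbp n G).
  { intros n.
    apply Sm_ext with (fun x => (omega^2 * ((x*x + (-rs^2)) * (x*x + (-rs^2)))) *
        / ((x*x + a^2)*(1 + (-/l^2)*(x*x)) + (-2*M)*x)).
    { intros x Hx.
      assert (EQ : (x*x+a^2)*(1+(-/l^2)*(x*x)) + (-2*M)*x = Defs.Delta l a M x)
        by (unfold Defs.Delta; field; auto).
      rewrite EQ. unfold G, Rdiv. ring. }
    apply Sm_mult.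
    - apply Sm_mult; [apply Sm_cst|].
      apply Sm_mult; apply Sm_plus; try apply Sm_cst; apply Sm_mult; apply Sm_id.
    - apply Sm_inv.
      + apply Sm_plus.
        * apply Sm_mult.
          -- apply Sm_plus; [apply Sm_mult; apply Sm_id | apply Sm_cst].
          -- apply Sm_plus; [apply Sm_cst|]. apply Sm_mult; [apply Sm_cst|]. apply Sm_mult; apply Sm_id.
        * apply Sm_mult; [apply Sm_cst | apply Sm_id].
      + intros x Hx. specialize (HDpos x Hx). unfold Defs.Delta in HDpos. intro E.
        replace ((x * x + a ^ 2) * (1 + - / l ^ 2 * (x * x)) + -2 * M * x) with
        ((x ^ 2 + a ^ 2) * (1 - x ^ 2 / l ^ 2) - 2 * M * x) in E by (field; auto). lra. }
  split.
  { intros n r Hr. destruct n as [|n]; [exact I|]. apply (Sm_exdn rp rbp); auto. }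
  exists rs. split; [lra|]. split.
  { rewrite HDG by lra. unfold Rdiv. ring. }
  split.
  { intros r Hr HD0. rewrite HDG in HD0 by auto.
    pose proof (HDpos r Hr) as Dr.
    rewrite HDf, HDp in HD0.
    assert (Hnum : omega^2 * ((r^2 - rs^2) * (/l^2 * ((r^2 - rs^2) * Qd rbm rm rp rbp r - 4*r*Qf rbm rm rp rbp r))) = 0).
    { unfold Rdiv in HD0. apply Rmult_integral in HD0. destruct HD0 as [E|E].
      - rewrite <- E. ring.
      - exfalso. revert E. apply Rinv_neq_0_compat. rewrite <- HDf. apply pow_nonzero. lra. }
    pose proof (Hpos rbm rm rp rbp r (rs^2) Hsum Hm Hmp Hr ltac:(nra)) as HP.
    apply Rmult_integral in Hnum. destruct Hnum as [E|E]; [lra|].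
    apply Rmult_integral in E. destruct E as [E|E].
    - nra.
    - apply Rmult_integral in E. destruct E; lra. }
  split.
  { intros r Hr. unfold G. pose proof (HDpos r Hr).
    replace (omega ^ 2 * (rs ^ 2 - rs ^ 2) ^ 2 / Defs.Delta l a M rs) with 0 by (unfold Rdiv; ring).
    unfold Rdiv. apply Rmult_le_pos; [|apply Rlt_le, Rinv_0_lt_compat; lra].
    apply Rmult_le_pos; [lra|]. apply pow2_ge_0. }
  split.
  { rewrite Hc. field. pose proof (Hu rs). lra. }
  split.
  { intros r Hr E. rewrite Hc in E.
    assert (E2 : omega * (r^2 - rs^2) = 0).
    { pose proof (Hu r). pose proof (Hu rs).
      assert (omega * (r^2+a^2) = omega * (rs^2+a^2)).
      { rewrite E at 1. field. lra. }
      lra. }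
    apply Rmult_integral in E2. destruct E2; [contradiction|]. nra. }
  assert (HD2 : Derive_n G 2 rs = 8 * omega^2 * rs^2 / Defs.Delta l a M rs).
  { simpl. apply is_derive_unique.
    apply is_derive_ext_loc with
      (fun r => omega^2 * (2*(r^2-rs^2)*(2*r) * Defs.Delta l a M r - (r^2-rs^2)^2 * Dp l a M r) / (Defs.Delta l a M r)^2).
    - apply (loc_int rp rbp); [lra|]. intros y Hy. rewrite HDG; auto.
    - apply G1_der; auto. specialize (HDpos rs ltac:(lra)). lra. }
  rewrite HD2. pose proof (HDpos rs ltac:(lra)).
  rewrite Rabs_right.
  - apply Rlt_gt. unfold Rdiv. apply Rmult_lt_0_compat; [|apply Rinv_0_lt_compat; lra].
    apply Rmult_lt_0_compat; [lra|]. nra.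
  - apply Rle_ge. unfold Rdiv. apply Rmult_le_pos; [|apply Rlt_le, Rinv_0_lt_compat; lra].
    apply Rmult_le_pos; [lra|]. nra.
Qed.
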